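(* Let $K$ be a field of characteristic zero and let $A_2$ be either $K\langle x,y\rangle$ or $K[x,y]$. Let $r=x+w(x,y)$, where $w(x,y)$ belongs to the two-sided ideal of $A_2$ generated by $y$ and $w(x,y)\notin K[y]$. Let $\pi$ be the endomorphism of $A_2$ (a retraction onto $K[r]$) defined by $\pi(x)=x+w(x,y)$, $\pi(y)=0$, and let $f\in K[t]\setminus K$. Then $\pi$ does not preserve the automorphic orbit of $f(r)$; that is, there is an automorphism $\alpha$ of $A_2$ such that $\pi(\alpha(f(r)))\neq\beta(f(r))$ for every automorphism $\beta$ of $A_2$.
   Context: Endomorphisms and automorphisms are $K$-algebra ones. The automorphic orbit of an element $q$ is $\{\beta(q):\beta\in\mathrm{Aut}(A_2)\}$, and an endomorphism preserves it if it maps this set into itself. *)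

(* Defs.v *)
From HB Require Import structures.
From mathcomp Require Import all_boot all_algebra.
From mathcomp Require Export monalg.
Set Implicit Arguments. Unset Strict Implicit. Unset Printing Implicit Defensive.
Import GRing.Theory.
Local Open Scope ring_scope.

(* The free associative algebra K<x,y>: monoid algebra of the free monoid on
   two letters; and the polynomial algebra K[x,y]: monoid algebra of the free
   commutative monoid on two letters. *)
Definition FreeAlg2 (K : fieldType) : lalgType K := {malg K[{fmonom 'I_2}]}.
Definition PolyAlg2 (K : fieldType) : lalgType K := {malg K[{cmonom 'I_2}]}.

Definition fx (K : fieldType) : FreeAlg2 K := << fmu (0 : 'I_2) >>.
Definition fy (K : fieldType) : FreeAlg2 K := << fmu (1 : 'I_2) >>.
Definition px (K : fieldType) : PolyAlg2 K := << ucm (0 : 'I_2) >>.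
Definition py (K : fieldType) : PolyAlg2 K := << ucm (1 : 'I_2) >>.

Definition peval (K : fieldType) (A : lalgType K) (p : {poly K}) (a : A) : A :=
  \sum_(i < size p) p`_i *: a ^+ i.

Definition in_ideal2 (R : nzRingType) (y w : R) : Prop :=
  exists n (a b : 'I_n -> R), w = \sum_(i < n) a i * y * b i.

Definition in_Kpoly (K : fieldType) (A : lalgType K) (y w : A) : Prop :=
  exists p : {poly K}, w = peval p y.

Definition is_aut (K : fieldType) (A : lalgType K) (f : {lrmorphism A -> A}) : Prop :=
  bijective f.

Definition lemma2p10_for (K : fieldType) (A : lalgType K) (x y : A) : Prop :=
  forall w : A, in_ideal2 y w -> ~ in_Kpoly y w ->
  forall pi : {lrmorphism A -> A}, pi x = x + w -> pi y = 0 ->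
  forall f : {poly K}, (1 < size f)%N ->
  exists alpha : {lrmorphism A -> A}, is_aut alpha /\
    forall beta : {lrmorphism A -> A}, is_aut beta ->
      pi (alpha (peval f (x + w))) != beta (peval f (x + w)).

(* Main.v *)
Require Import Defs.
From HB Require Import structures.
From mathcomp Require Import all_boot all_algebra.
From mathcomp Require Import finmap monalg zify.
Import GRing.Theory.
Local Open Scope ring_scope.

Section Gen.
Variable K : fieldType.
Variable M : monomType.
Variables x0 y0 : M.
Variable ok : forall B : nzRingType, B -> B -> Prop.
Variable mev : forall B : nzRingType, B -> B -> M -> B.
Arguments mev {B}.
Arguments ok {B}.
Hypothesis mev1 : forall (B : nzRingType) (a b : B), mev a b mone = 1.
Hypothesis mevM : forall (B : nzRingType) (a b : B), ok a b ->
  forall m1 m2, mev a b (mmul m1 m2) = mev a b m1 * mev a b m2.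
Hypothesis ok_comm : forall (B : nzRingType) (a b : B), GRing.comm a b -> ok a b.
Hypothesis mevx : forall (B : nzRingType) (a b : B), mev a b x0 = a.
Hypothesis mevy : forall (B : nzRingType) (a b : B), mev a b y0 = b.
Hypothesis mevF : forall (B C : nzRingType) (F : B -> C), F 1 = 1 ->
  {morph F : u v / u * v} -> forall a b m, F (mev a b m) = mev (F a) (F b) m.
Hypothesis mevU : forall m, (<< m >> : {malg K[M]}) = mev << x0 >> << y0 >> m.

Local Notation A := {malg K[M]}.
Arguments mevM {B a b}.
Hypothesis okA : forall a b : A, ok a b.

Definition Ev (B : nzRingType) (i : {additive K -> B}) (a b : B) (q : A) : B :=
  mmap i (mev a b) q.

Arguments Ev {B}.
Lemma EvE (B : nzRingType) (i : {additive K -> B}) a b q :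
  Ev i a b q = \sum_(m <- msupp q) i q@_m * mev a b m.
Proof. by []. Qed.

Lemma EvU (B : nzRingType) (i : {additive K -> B}) a b c m :
  Ev i a b << c *g m >> = i c * mev a b m.
Proof. by rewrite /Ev mmapU. Qed.

Lemma EvD (B : nzRingType) (i : {additive K -> B}) a b q1 q2 :
  Ev i a b (q1 + q2) = Ev i a b q1 + Ev i a b q2.
Proof. by rewrite /Ev raddfD. Qed.

Lemma Ev0 (B : nzRingType) (i : {additive K -> B}) a b :
  Ev i a b 0 = 0.
Proof. by rewrite /Ev raddf0. Qed.

Lemma EvN (B : nzRingType) (i : {additive K -> B}) a b q :
  Ev i a b (- q) = - Ev i a b q.
Proof. by rewrite /Ev raddfN. Qed.

Lemma Ev_sum (B : nzRingType) (i : {additive K -> B}) a b (I : Type) (r : seq I) (F : I -> A) :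
  Ev i a b (\sum_(j <- r) F j) = \sum_(j <- r) Ev i a b (F j).
Proof. by rewrite /Ev raddf_sum. Qed.

Lemma EvC (B : nzRingType) (i : {additive K -> B}) a b c :
  Ev i a b c%:MP = i c.
Proof. by rewrite EvU mev1 mulr1. Qed.

Lemma EvM (B : nzRingType) (i : {rmorphism K -> B}) a b :
  ok a b -> (forall c v, GRing.comm (i c) v) ->
  forall q1 q2, Ev i a b (q1 * q2) = Ev i a b q1 * Ev i a b q2.
Proof.
move=> oab ic q1 q2; rewrite malgME Ev_sum !EvE big_distrl /=.
apply: eq_bigr => k1 _; rewrite Ev_sum big_distrr /=; apply: eq_bigr => k2 _.
rewrite EvU -[LHS]/(i (q1@_k1 * q2@_k2) * mev a b (mmul k1 k2)).
rewrite rmorphM (mevM oab) -!mulrA; congr (_ * _).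
by rewrite !mulrA (ic _ (mev a b k1)).
Qed.

Lemma Ev_morph (B C : nzRingType) (i : {additive K -> B}) (j : {additive K -> C})
  (F : B -> C) : F 0 = 0 -> {morph F : u v / u + v} -> F 1 = 1 ->
  {morph F : u v / u * v} -> (forall c, j c = F (i c)) ->
  forall a b q, F (Ev i a b q) = Ev j (F a) (F b) q.
Proof.
move=> F0 FD F1 FM ij a b q; rewrite !EvE (big_morph F FD F0).
by apply: eq_bigr => m _; rewrite FM ij mevF.
Qed.

Lemma malgU_scale (c : K) m : << c *g m >> = c *: (<< m >> : A).
Proof.
rewrite -mul_malgC malgM_def /mkmalgU.
have -> : fgmul << c *g mone >> << 1 *g m >> = << c * 1 *g mmul mone m >> by rewrite fgmulUU.
by rewrite mulr1 mul1m.
Qed.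

Lemma malgC_alg (c : K) : c%:A = c%:MP :> A.
Proof. by rewrite -mul_malgC mulr1. Qed.

Lemma Ev_id q : Ev (in_alg A) << x0 >> << y0 >> q = q.
Proof.
rewrite EvE [RHS]monalgE; apply: eq_bigr => m _.
by rewrite -mevU malgU_scale mulr_algl.
Qed.


Lemma malgC_comm (c : K) (v : A) : GRing.comm (c%:MP) v.
Proof.
rewrite /GRing.comm mul_malgC.
rewrite {1 2}[v]monalgE.
rewrite big_distrl scaler_sumr /=.
apply: eq_bigr => m _; rewrite malgM_def fgmulUU mulm1 (malgU_scale (v@_m)) (malgU_scale (v@_m * c)) scalerA mulrC.
by [].
Qed.

Lemma Ev1 (B : nzRingType) (i : {rmorphism K -> B}) a b : Ev i a b 1 = 1.
Proof. by rewrite -mpolyC1E EvC; apply: rmorph1. Qed.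

Definition alphaf (N : nat) : A -> A :=
  Ev (in_alg A) (<< y0 >> + << x0 >> ^+ N) << x0 >>.

Lemma alphaf_is_additive N : additive (alphaf N).
Proof. by move=> u v; rewrite /alphaf /Ev raddfB. Qed.

Lemma alphaf_is_multiplicative N : multiplicative (alphaf N).
Proof.
split; last exact: Ev1.
move=> u v; apply: EvM => // c w; rewrite /= malgC_alg; exact: malgC_comm.
Qed.

Lemma alphaf_is_scalable N : scalable (alphaf N).
Proof.
move=> c u; rewrite -mul_malgC (alphaf_is_multiplicative N).1 /alphaf EvC /=.
by rewrite mulr_algl.
Qed.

HB.instance Definition _ N := GRing.isZmodMorphism.Build A A (alphaf N) (alphaf_is_additive N).
HB.instance Definition _ N := GRing.isMultiplicative.Build A A (alphaf N) (alphaf_is_multiplicative N).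
HB.instance Definition _ N := GRing.isScalable.Build K A A *:%R (alphaf N) (alphaf_is_scalable N).

Definition alpha N : {lrmorphism A -> A} := alphaf N.


Lemma exprF (B C : nzRingType) (F : B -> C) : F 1 = 1 -> {morph F : u v / u * v} ->
  forall a n, F (a ^+ n) = F a ^+ n.
Proof.
move=> F1 FM a; elim=> [|k IH]; first by rewrite !expr0.
by rewrite !exprS FM IH.
Qed.

Lemma peval_F (B C : lalgType K) (F : B -> C) : F 0 = 0 -> {morph F : u v / u + v} ->
  (forall c u, F (c *: u) = c *: F u) -> F 1 = 1 -> {morph F : u v / u * v} ->
  forall p a, F (peval p a) = peval p (F a).
Proof.
move=> F0 FD FZ F1 FM p a; rewrite /peval (big_morph F FD F0).
by apply: eq_bigr => i _; rewrite FZ exprF.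
Qed.

Lemma pevalX (p : {poly K}) : peval p 'X = p.
Proof. by rewrite /peval -[RHS]coefK poly_def. Qed.

Lemma EvX (B : nzRingType) (i : {rmorphism K -> B}) a b : Ev i a b << x0 >> = a.
Proof. by rewrite EvU mevx; set t := (X in X * _); rewrite -[t]/(i 1) rmorph1 mul1r. Qed.

Lemma EvY (B : nzRingType) (i : {rmorphism K -> B}) a b : Ev i a b << y0 >> = b.
Proof. by rewrite EvU mevy; set t := (X in X * _); rewrite -[t]/(i 1) rmorph1 mul1r. Qed.

Lemma EvZ (B : lalgType K) a b : ok a b -> (forall c v, GRing.comm (in_alg B c) v) ->
  forall c q, Ev (in_alg B) a b (c *: q) = c *: Ev (in_alg B) a b q.
Proof.
move=> oab hc c q; rewrite -mul_malgC EvM // EvC /=.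
by rewrite mulr_algl.
Qed.

Lemma EvA_comm (c : K) (v : A) : GRing.comm (in_alg A c) v.
Proof. rewrite /= malgC_alg; exact: malgC_comm. Qed.

Lemma EvA_comp (a b a' b' : A) q :
  Ev (in_alg A) a b (Ev (in_alg A) a' b' q) =
  Ev (in_alg A) (Ev (in_alg A) a b a') (Ev (in_alg A) a b b') q.
Proof.
apply: Ev_morph.
- exact: Ev0.
- by move=> u v; rewrite EvD.
- exact: Ev1.
- by move=> u v; rewrite (EvM _ _ _ _ (okA _ _) EvA_comm).
- by move=> c; rewrite /= malgC_alg EvC /= malgC_alg.
Qed.

Lemma alpha_bij N : bijective (alpha N).
Proof.
pose x := << x0 >> : A; pose y := << y0 >> : A.
exists (Ev (in_alg A) y (x - y ^+ N)) => q.
- rewrite /= /alphaf EvA_comp.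
  have eF : forall u, Ev (in_alg A) y (x - y ^+ N) (u ^+ N) = (Ev (in_alg A) y (x - y ^+ N) u) ^+ N.
    move=> u; apply: (@exprF _ _ (Ev (in_alg A) y (x - y ^+ N))); first exact: Ev1.
    by move=> u1 v1; rewrite (EvM _ _ _ _ (okA _ _) EvA_comm).
  rewrite EvD eF !EvX EvY subrK.
  exact: Ev_id.
- rewrite /= /alphaf EvA_comp.
  have eF : forall u, Ev (in_alg A) (y + x ^+ N) x (u ^+ N) = (Ev (in_alg A) (y + x ^+ N) x u) ^+ N.
    move=> u; apply: (@exprF _ _ (Ev (in_alg A) (y + x ^+ N) x)); first exact: Ev1.
    by move=> u1 v1; rewrite (EvM _ _ _ _ (okA _ _) EvA_comm).
  rewrite EvD EvN eF /y /x !EvY !EvX addrK.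
  exact: Ev_id.
Qed.

Theorem main_gen : lemma2p10_for (<< x0 >> : A) << y0 >>.
Proof.
move=> w [n [a_ [b_ wE]]] _ pi pix piy f fsz.
pose x := << x0 >> : A; pose y := << y0 >> : A.
pose P := {poly K}.
pose iP := in_alg P.
pose Phi := Ev iP ('X : P) 0.
have Pc : forall (c : K) (v : P), GRing.comm (iP c) v by move=> c v; apply: mulrC.
have Pok : forall a b : P, ok a b by move=> a b; apply: ok_comm; apply: mulrC.
have Phi0 : Phi 0 = 0 by apply: Ev0.
have PhiD : {morph Phi : u v / u + v} by move=> u v; apply: EvD.
have Phi1 : Phi 1 = 1 by apply: Ev1.
have PhiM : {morph Phi : u v / u * v} by move=> u v; apply: EvM.
have PhiZ : forall c u, Phi (c *: u) = c *: Phi u by move=> c u; apply: EvZ.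
have PhiC : forall c : K, Phi (in_alg A c) = iP c by move=> c; rewrite /= malgC_alg /Phi EvC.
have Phix : Phi x = 'X by apply: EvX.
have Phiy : Phi y = 0 by apply: EvY.
have Phiw : Phi w = 0.
  rewrite wE /Phi Ev_sum big1 // => j _.
  change (Phi (a_ j * y * b_ j) = 0).
  by rewrite !PhiM Phiy mulr0 mul0r.
pose P2 := {poly P}.
pose i2 : {rmorphism K -> P2} := (@polyC P) \o (@polyC K).
pose ev2 := Ev i2 ('X : P2) ('X%:P).
have ev2M : {morph ev2 : u v / u * v}.
  move=> u v; apply: EvM; first by apply: ok_comm; apply: mulrC.
  by move=> c v'; apply: mulrC.
pose Q := \sum_(j < n) ev2 (a_ j) * ev2 (b_ j).
have ev2w : ev2 w = 'X%:P * Q.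
  rewrite wE /ev2 Ev_sum /Q mulr_sumr; apply: eq_bigr => j _.
  change (ev2 (a_ j * y * b_ j) = 'X%:P * (ev2 (a_ j) * ev2 (b_ j))).
  rewrite !ev2M [ev2 y]EvY.
  by rewrite mulrAC mulrC.
pose N := ((\max_(j < size Q) size (Q`_j)%R)%N).+2.
exists (alpha N); split; first exact: alpha_bij.
move=> beta [g gK Kg]; apply/eqP => H.
have gD : {morph g : u v / u + v}.
  by move=> u v; apply: (can_inj gK); rewrite (raddfD beta) Kg; congr (_ + _); symmetry; apply: Kg.
have g0 : g 0 = 0 by apply: (can_inj gK); rewrite raddf0 Kg.
have g1 : g 1 = 1 by apply: (can_inj gK); rewrite rmorph1 Kg.
have gM : {morph g : u v / u * v}.
  by move=> u v; apply: (can_inj gK); rewrite (rmorphM beta) Kg; congr (_ * _); symmetry; apply: Kg.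
have gZ : forall c u, g (c *: u) = c *: g u.
  by move=> c u; apply: (can_inj gK); rewrite (linearZ_LR beta) Kg; congr (_ *: _); symmetry; apply: Kg.
have gC : forall c : K, g (in_alg A c) = in_alg A c.
  by move=> c; rewrite /= gZ g1.
pose r := x + w.
have HR : Phi (g (beta (peval f r))) = f.
  rewrite gK (@peval_F _ _ Phi Phi0 PhiD PhiZ Phi1 PhiM) PhiD Phix Phiw addr0.
  exact: pevalX.
have piE : forall q, pi q = Ev (in_alg A) r 0 q.
  move=> q; rewrite -{1}[q]Ev_id.
  rewrite (@Ev_morph _ _ (in_alg A) (in_alg A) pi (raddf0 pi) (raddfD pi) (rmorph1 pi) (rmorphM pi)).
    by rewrite pix piy.
  by move=> c; rewrite rmorph_alg.
have HL1 : pi (alpha N (peval f r)) = peval f (pi (alpha N r)).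
  apply: (@peval_F A A (fun q => pi (alpha N q))).
  - by rewrite !raddf0.
  - by move=> u v; rewrite !raddfD.
  - by move=> c u; rewrite !linearZ_LR.
  - by rewrite !rmorph1.
  - by move=> u v; rewrite !rmorphM.
have PsiE : forall q, Phi (g (pi q)) = (Phi q) \Po (Phi (g r)).
  move=> q; rewrite piE.
  rewrite (@Ev_morph _ _ (in_alg A) iP (fun u => Phi (g u))) /=; first last.
  - by move=> c; rewrite gC PhiC.
  - by move=> u v; rewrite gM PhiM.
  - by rewrite g1 Phi1.
  - by move=> u v; rewrite gD PhiD.
  - by rewrite g0 Phi0.
  rewrite g0 Phi0 /Phi.
  rewrite (@Ev_morph _ _ iP iP (fun p : P => p \Po Phi (g r))) /=; first last.
  - by move=> c; rewrite alg_polyC comp_polyC.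
  - by move=> u v; rewrite comp_polyM.
  - by rewrite -polyC1 comp_polyC.
  - by move=> u v; rewrite comp_polyD.
  - by rewrite comp_poly0.
  by rewrite comp_polyX comp_poly0.
have PhiA : Phi (alpha N r) = Ev iP ('X ^+ N) 'X r.
  rewrite /= /alphaf (@Ev_morph _ _ (in_alg A) iP Phi Phi0 PhiD Phi1 PhiM) //.
  rewrite PhiD Phiy (@exprF _ _ Phi Phi1 PhiM) Phix add0r.
  by [].
  by move=> c; rewrite PhiC.
have HorE : Ev iP ('X ^+ N) 'X r = (ev2 r).[('X : P) ^+ N].
  rewrite /ev2 (@Ev_morph _ _ i2 iP (fun p : P2 => p.[('X : P) ^+ N])) /=; first last.
  - by move=> c; rewrite hornerC alg_polyC.
  - by move=> u v; rewrite hornerM.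
  - by rewrite hornerC.
  - by move=> u v; rewrite hornerD.
  - by rewrite horner0.
  by rewrite hornerX hornerC.
move: H => /(congr1 (fun u => Phi (g u))); rewrite HR HL1.
rewrite (@peval_F _ _ g g0 gD gZ g1 gM) (@peval_F _ _ Phi Phi0 PhiD PhiZ Phi1 PhiM).
rewrite PsiE PhiA HorE.
set u := Phi (g r).
set Pp := (ev2 r).[('X : P) ^+ N].
have PpN : Pp`_N = 1.
  rewrite /Pp /r /ev2 EvD EvX -/ev2 ev2w hornerD hornerX hornerM hornerC coefD.
  rewrite coefXn eqxx coefXM /= horner_coef coef_sum big1 ?addr0 // => [[j hj]] _ /=.
  rewrite -exprM coefMXn.
  case: j hj => [|j] hj.
    rewrite muln0 /= subn0 nth_default //.
    apply: (@leq_trans (\max_(j < size Q) size (Q`_j)%R)); last exact: leqnSn.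
    by rewrite (bigD1 (Ordinal hj)) //= leq_max leqnn.
  rewrite ifT //.
  exact: leq_trans (leqnn N) (leq_pmulr N (ltn0Sn j)).
have szP : (N < size Pp)%N.
  rewrite ltnNge; apply/negP => hs.
  by move: PpN; rewrite nth_default // => /eqP; rewrite eq_sym oner_eq0.
have Hc : peval f (Pp \Po u) = f \Po (Pp \Po u).
  by rewrite [RHS]comp_polyE.
rewrite Hc => Hf.
have e := size_comp_poly f (Pp \Po u).
have e2 := size_comp_poly Pp u.
rewrite Hf e2 in e.
have N2 : (2 <= N)%N by [].
move: e fsz szP N2; set sf := size f; set sP := size Pp; set su := size u.
clearbody sf sP su N => e h1 h2 h3.
case: su e => [|su] /= e; first by nia.
case: su e => [|su] /= e; first by nia.
nia.
Qed.

End Gen.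

Definition mevF (B : nzRingType) (a b : B) (m : fmonom 'I_2) : B :=
  \prod_(i <- fmonom_val m) (if i == 0 then a else b).

Lemma malgU_mul (K : fieldType) (M : monomType) (m1 m2 : M) :
  (<< mmul m1 m2 >> : {malg K[M]}) = << m1 >> * << m2 >>.
Proof. by rewrite malgM_def fgmulUU mulr1. Qed.

Lemma free_main (K : fieldType) : lemma2p10_for (fx K) (fy K).
Proof.
apply: (@main_gen K (fmonom 'I_2) (fmu 0) (fmu 1) (fun _ _ _ => True) mevF).
- by move=> B a b; rewrite /mevF fm1 big_nil.
- by move=> B a b _ m1 m2; rewrite /mevF fmM big_cat.
- by [].
- by move=> B a b; rewrite /mevF fmU big_seq1.
- by move=> B a b; rewrite /mevF fmU big_seq1.
- move=> B C F F1 FM a b m; rewrite /mevF (big_morph F FM F1).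
  by apply: eq_bigr => i _; case: ifP.
- case=> s; rewrite /mevF /=; elim: s => [|i s IH].
    by rewrite big_nil -fmoneE -mpolyC1E.
  rewrite big_cons (_ : FMonom (i :: s) = mmul (fmu i) (FMonom s)); last first.
    by apply: val_inj; rewrite /= fmM fmU.
  rewrite malgU_mul IH; congr (_ * _).
  case: ifP => [/eqP -> //|]; case: i => [[|[|k]]] //= hk _; by congr << fmu _ >>; apply: val_inj.
- by [].
Qed.

Definition mevC (B : nzRingType) (a b : B) (m : cmonom 'I_2) : B :=
  a ^+ (m 0) * b ^+ (m 1).

Fixpoint mpow (M : monomType) (u : M) (k : nat) {struct k} : M :=
  if k is kk.+1 then mmul u (mpow M u kk) else mone.

Arguments mpow {M}.
Lemma malgU_pow (K : fieldType) (M : monomType) (u : M) k :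
  (<< mpow u k >> : {malg K[M]}) = << u >> ^+ k.
Proof.
elim: k => [|k IH] /=; first by rewrite expr0 -mpolyC1E.
by rewrite malgU_mul IH exprS.
Qed.

Lemma cm_mpow (u : cmonom 'I_2) k i : mpow u k i = (u i * k)%N.
Proof.
elim: k => [|k IH] /=; first by rewrite cm1 muln0.
by rewrite cmM IH mulnS.
Qed.

Lemma cm_decomp (m : cmonom 'I_2) :
  m = mmul (mpow (ucm 0) (m 0)) (mpow (ucm 1) (m 1)).
Proof.
apply/eqP/cmP => i; rewrite cmM !cm_mpow !cmU.
case: i => [[|[|k]]] hk //=.
- by rewrite mul1n mul0n addn0; congr (m _); apply: val_inj.
- by rewrite mul1n mul0n add0n; congr (m _); apply: val_inj.
Qed.

Lemma poly_main (K : fieldType) : lemma2p10_for (px K) (py K).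
Proof.
apply: (@main_gen K (cmonom 'I_2) (ucm 0) (ucm 1) (fun B a b => @GRing.comm B a b) mevC).
- by move=> B a b; rewrite /mevC !cm1 !expr0 mulr1.
- move=> B a b ab m1 m2; rewrite /mevC !cmM !exprD -!mulrA; congr (_ * _).
  rewrite !mulrA; congr (_ * _).
  by apply: commrX; apply/commr_sym; apply: commrX.
- by [].
- by move=> B a b; rewrite /mevC !cmU /= expr1 expr0 mulr1.
- by move=> B a b; rewrite /mevC !cmU /= expr1 expr0 mul1r.
- move=> B C F F1 FM a b m; rewrite /mevC FM.
  by rewrite (@exprF _ _ F F1 FM) (@exprF _ _ F F1 FM).
- by move=> m; rewrite /mevC {1}(cm_decomp m) malgU_mul !malgU_pow.
- by move=> a b; apply: mulrC.
Qed.

Theorem lemma2p10 (K : fieldType) (charK0 : [pchar K] =i pred0) :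
  lemma2p10_for (fx K) (fy K) /\ lemma2p10_for (px K) (py K).
Proof. by split; [apply: free_main | apply: poly_main]. Qed.
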